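(* For a mutually orthogonal $d$-dimensional pure-state ensemble $\Omega=\{(p_i,|\psi_i\rangle)\}_{i=0}^{k-1}$, \[ \mathbf{C}_{\mathrm{MIO}}(\Omega)+\mathbf{S}_{\min}(\Omega)\le \log_2 d, \] where $\mathbf{S}_{\min}(\Omega)=-\log_2 p_{\max}$ with $p_{\max}=\max_i p_i$ (the min-entropy of the average state $\hat\omega=\sum_i p_i|\psi_i\rangle\langle\psi_i|$).
   Context: Incoherent states $\mathcal{I}$ are density matrices diagonal in the computational basis; MIO are channels mapping $\mathcal{I}$ into $\mathcal{I}$. Robustness of coherence: $C_R(\rho)=\min\{s\ge0:(\rho+s\tau)/(1+s)\in\mathcal{I}\text{ for some state }\tau\}$. Post-discrimination coherence: $\mathbf{C}_{\mathrm{MIO}}(\Omega)=\log_2(1+\eta)$, $\eta=\max\sum_j p_j C_R(\sigma_j)$ over MIO channels $\mathcal{N}_{A\to BA'}$ ($\dim B=k$, $A'\cong A$) with $\sigma_j=\mathrm{tr}_B[\mathcal{N}(\rho_j)]$ and $\sum_j p_j\mathrm{tr}[\mathcal{N}(\rho_j)(|j\rangle\langle j|_B\otimes I_{A'})]=P_{\mathrm{suc}}(\Omega)$, the optimal POVM discrimination probability (equal to 1 here). *)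

(* Defs.v *)
From HB Require Import structures.
From mathcomp Require Import all_boot all_order all_algebra.
From mathcomp Require Import complex mxtens.
From mathcomp Require Import classical_sets reals exp.

Set Implicit Arguments.
Unset Strict Implicit.
Unset Printing Implicit Defensive.

Import Order.TTheory GRing.Theory Num.Theory.
Local Open Scope ring_scope.
Local Open Scope complex_scope.

Section QuantumCoherence.
Variable R : realType.
Local Notation C := R[i].

Definition adjmx m n (A : 'M[C]_(m, n)) : 'M[C]_(n, m) := (map_mx conjc A)^T.

(* positive semidefinite: <v, A v> >= 0 for every vector v
   (in the order of the num field C, this forces the value to be real) *)
Definition psd n (A : 'M[C]_n) : Prop :=
  forall v : 'cV[C]_n, 0 <= (adjmx v *m A *m v) ord0 ord0.

Definition density n (A : 'M[C]_n) : Prop := psd A /\ \tr A = 1.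

Definition incoherent n (A : 'M[C]_n) : Prop := density A /\ is_diag_mx A.

Definition choi n m (N : 'M[C]_n -> 'M[C]_m) : 'M[C]_(n * m) :=
  \sum_(a < n) \sum_(b < n) (delta_mx a b *t N (delta_mx a b)).

Definition channel n m (N : {linear 'M[C]_n -> 'M[C]_m}) : Prop :=
  psd (choi N) /\ forall A : 'M[C]_n, \tr (N A) = \tr A.

Definition MIO n m (N : {linear 'M[C]_n -> 'M[C]_m}) : Prop :=
  channel N /\ forall A : 'M[C]_n, incoherent A -> incoherent (N A).

Definition ptrB k d (M : 'M[C]_(k * d)) : 'M[C]_d :=
  \matrix_(i < d, j < d) \sum_(b < k) M (mxtens_index (b, i)) (mxtens_index (b, j)).

Definition projB k d (j : 'I_k) : 'M[C]_(k * d) := delta_mx j j *t (1%:M : 'M[C]_d).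

Definition robustness n (rho : 'M[C]_n) : R :=
  inf [set s : R | 0 <= s /\ exists tau : 'M[C]_n, density tau /\
        incoherent (((1 + s)^-1)%:C *: (rho + s%:C *: tau))].

Definition pure_proj d (psi : 'cV[C]_d) : 'M[C]_d := psi *m adjmx psi.

Definition POVM k d (M : 'I_k -> 'M[C]_d) : Prop :=
  (forall j, psd (M j)) /\ \sum_(j < k) M j = 1%:M.

Definition Psuc k d (p : 'I_k -> R) (rho : 'I_k -> 'M[C]_d) : R :=
  sup [set x : R | exists M : 'I_k -> 'M[C]_d, POVM M /\
        x%:C = \sum_(j < k) (p j)%:C * \tr (M j *m rho j)].

Definition log2 (x : R) : R := ln x / ln 2.

Definition eta_MIO k d (p : 'I_k -> R) (rho : 'I_k -> 'M[C]_d) : R :=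
  sup [set x : R | exists N : {linear 'M[C]_d -> 'M[C]_(k * d)}, MIO N /\
        \sum_(j < k) (p j)%:C * \tr (N (rho j) *m projB d j) = (Psuc p rho)%:C /\
        x = \sum_(j < k) p j * robustness (ptrB (N (rho j)))].

Definition C_MIO k d (p : 'I_k -> R) (rho : 'I_k -> 'M[C]_d) : R :=
  log2 (1 + eta_MIO p rho).

Definition S_min k (p : 'I_k -> R) : R := - log2 (\big[Num.max/0]_(i < k) p i).

Definition orthonormal_states k d (psi : 'I_k -> 'cV[C]_d) : Prop :=
  forall i j : 'I_k, (adjmx (psi i) *m psi j) ord0 ord0 = (i == j)%:R.

End QuantumCoherence.

(* Main.v *)
Require Import Defs.
From HB Require Import structures.
From mathcomp Require Import all_boot all_order all_algebra.
From mathcomp Require Import complex mxtens.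
From mathcomp Require Import classical_sets reals exp.
Import Order.TTheory GRing.Theory Num.Theory.
Local Open Scope ring_scope.

From mathcomp Require Import ring lra.
Local Open Scope complex_scope.
Set Implicit Arguments.
Unset Strict Implicit.
Unset Printing Implicit Defensive.

Lemma adjmxE (R : realType) m n (A : 'M[R[i]]_(m,n)) i j : adjmx A i j = (conjc (A j i)).
Proof. by rewrite !mxE. Qed.

Lemma adjmxD (R : realType) m n (A B : 'M[R[i]]_(m,n)) : adjmx (A + B) = adjmx A + adjmx B.
Proof. by apply/matrixP => i j; rewrite !mxE rmorphD. Qed.

Lemma adjmxN (R : realType) m n (A : 'M[R[i]]_(m,n)) : adjmx (- A) = - adjmx A.
Proof. by apply/matrixP => i j; rewrite !mxE rmorphN. Qed.

Lemma adjmxB (R : realType) m n (A B : 'M[R[i]]_(m,n)) : adjmx (A - B) = adjmx A - adjmx B.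
Proof. by rewrite adjmxD adjmxN. Qed.

Lemma adjmxZ (R : realType) m n (a : R[i]) (A : 'M[R[i]]_(m,n)) : adjmx (a *: A) = (conjc a) *: adjmx A.
Proof. by apply/matrixP => i j; rewrite !mxE rmorphM. Qed.

Lemma adjmxK (R : realType) m n (A : 'M[R[i]]_(m,n)) : adjmx (adjmx A) = A.
Proof. by apply/matrixP => i j; rewrite !mxE conjcK. Qed.

Lemma adjmx_mul (R : realType) m n p (A : 'M[R[i]]_(m,n)) (B : 'M[R[i]]_(n,p)) :
  adjmx (A *m B) = adjmx B *m adjmx A.
Proof. by rewrite /adjmx map_mxM trmx_mul. Qed.

Lemma adjmx1 (R : realType) n : adjmx (1%:M : 'M[R[i]]_n) = 1%:M.
Proof. by apply/matrixP => i j; rewrite !mxE eq_sym conjc_nat. Qed.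

Lemma adjmx_sum (R : realType) m n (I : finType) (F : I -> 'M[R[i]]_(m,n)) :
  adjmx (\sum_i F i) = \sum_i adjmx (F i).
Proof. by apply/matrixP => i j; rewrite !mxE !summxE rmorph_sum; apply: eq_bigr => l _; rewrite !mxE. Qed.

Definition qf (R : realType) n (A : 'M[R[i]]_n) (v : 'cV[R[i]]_n) := (adjmx v *m A *m v) ord0 ord0.

Lemma qfD (R : realType) n (A B : 'M[R[i]]_n) v : qf (A + B) v = qf A v + qf B v.
Proof. by rewrite /qf mulmxDr mulmxDl mxE. Qed.

Lemma qfZ (R : realType) n a (A : 'M[R[i]]_n) v : qf (a *: A) v = a * qf A v.
Proof. by rewrite /qf -scalemxAr -scalemxAl mxE. Qed.

Lemma psdD (R : realType) n (A B : 'M[R[i]]_n) : psd A -> psd B -> psd (A + B).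
Proof. by move=> hA hB v; have := qfD A B v; rewrite /qf => ->; apply: addr_ge0. Qed.

Lemma psdZ (R : realType) n a (A : 'M[R[i]]_n) : 0 <= a -> psd A -> psd (a *: A).
Proof. by move=> ha hA v; have := qfZ a A v; rewrite /qf => ->; apply: mulr_ge0. Qed.

Lemma psd0 (R : realType) n : psd (0 : 'M[R[i]]_n).
Proof. by move=> v; rewrite mulmx0 mul0mx mxE. Qed.

Lemma psd_sum (R : realType) n (I : finType) (F : I -> 'M[R[i]]_n) :
  (forall i, psd (F i)) -> psd (\sum_i F i).
Proof. by move=> h; apply: (big_ind (@psd R n)) => //; [exact: psd0 | exact: psdD]. Qed.

Lemma mulJ_ge0 (R : realType) (x : R[i]) : 0 <= (conjc x) * x.
Proof. by rewrite mulrC mulcJ_ge0. Qed.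

Lemma psd_gram (R : realType) m n (B : 'M[R[i]]_(m,n)) : psd (adjmx B *m B).
Proof.
move=> v; rewrite mulmxA -mulmxA -adjmx_mul mxE; apply: sumr_ge0 => i _.
by rewrite !mxE mulJ_ge0.
Qed.

Lemma conjM (R : realType) (x y : R[i]) : (conjc (x * y)) = (conjc x) * (conjc y).
Proof. by case: x => a b; case: y => c e; apply/eqP; rewrite eq_complex /= !mulrN !mulNr opprK opprD !eqxx. Qed.

Lemma adj_delta (R : realType) n (i : 'I_n) : adjmx (delta_mx i ord0 : 'cV[R[i]]_n) = delta_mx ord0 i.
Proof. by apply/matrixP => a b; rewrite !mxE conjc_nat andbC. Qed.

Lemma delta_entry (R : realType) n (A : 'M[R[i]]_n) i l :
  ((delta_mx (ord0 : 'I_1) i : 'rV[R[i]]_n) *m A *m (delta_mx l (ord0 : 'I_1) : 'cV[R[i]]_n)) ord0 ord0 = A i l.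
Proof. by rewrite -rowE -colE !mxE. Qed.

Lemma psd_diag (R : realType) n (A : 'M[R[i]]_n) i : psd A -> 0 <= A i i.
Proof. by move=> /(_ (delta_mx i ord0)); rewrite adj_delta delta_entry. Qed.

Lemma addmxE' (R : realType) m n (A B : 'M[R[i]]_(m,n)) i j : (A + B) i j = A i j + B i j.
Proof. by rewrite mxE. Qed.
Lemma scalemxE' (R : realType) m n a (A : 'M[R[i]]_(m,n)) i j : (a *: A) i j = a * A i j.
Proof. by rewrite mxE. Qed.

Lemma qf_two (R : realType) n (A : 'M[R[i]]_n) i l (z : R[i]) :
  qf A (delta_mx i (ord0 : 'I_1) + z *: delta_mx l ord0) =
  A i i + z * A i l + (conjc z) * A l i + (conjc z) * z * A l l.
Proof.
rewrite /qf adjmxD adjmxZ !adj_delta.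
rewrite !(mulmxDl, mulmxDr) -!scalemxAl -!scalemxAr !addmxE' !scalemxE' !delta_entry.
ring.
Qed.

Lemma ge0_opp_eq0 (R : realType) (x : R[i]) : 0 <= x -> 0 <= - x -> x = 0.
Proof. by move=> h1; rewrite oppr_ge0 => h2; apply/le_anti; rewrite h1 h2. Qed.

Lemma psd_off0 (R : realType) n (A : 'M[R[i]]_n) i l :
  psd A -> A i i = 0 -> A l l = 0 -> A i l = 0.
Proof.
move=> hA hi hl.
have h z : 0 <= z * A i l + (conjc z) * A l i.
  have := hA (delta_mx i ord0 + z *: delta_mx l ord0).
  by rewrite -/(qf _ _) qf_two hi hl !mulr0 addr0 add0r.
have e1 : A i l + A l i = 0.
  apply: ge0_opp_eq0; first by have := h 1; rewrite rmorph1 !mul1r.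
  by have := h (-1); rewrite rmorphN rmorph1 !mulN1r opprD.
have h' (x y : R) : 0 <= (x +i* y) * A i l + (x -i* y) * A l i by exact: (h (x +i* y)).
have e2 : 'i * A i l - 'i * A l i = 0.
  apply: ge0_opp_eq0.
    have := h' 0 1; rewrite -[0 +i* 1]/('i : R[i]).
    suff -> : (0 -i* 1 : R[i]) = - 'i by rewrite mulNr.
    by apply/eqP; rewrite eq_complex /= oppr0 !eqxx.
  have := h' 0 (-1).
  have E1 : ((-1)*i : R[i]) = - 'i by apply/eqP; rewrite eq_complex /= oppr0 !eqxx.
  have E2 : ((- (-1))*i : R[i]) = 'i by apply/eqP; rewrite eq_complex /=; apply/andP; split => //; apply/eqP; exact: opprK.
  by rewrite E1 E2 mulNr opprD opprK addrC.
have : 'i * (A i l *+ 2) = 0.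
  have e1' : A l i = - A i l by apply/eqP; rewrite -addr_eq0 addrC e1.
  rewrite -[RHS]e2 e1'; ring.
move/eqP; rewrite mulf_eq0 mulrn_eq0 /= => /orP[|/eqP //].
by rewrite eq_complex /= oner_eq0 andbF.
Qed.

Lemma psd_tr0 (R : realType) n (A : 'M[R[i]]_n) : psd A -> \tr A = 0 -> A = 0.
Proof.
move=> hA htr.
have hd : forall i, A i i = 0.
  move=> i; apply: (@psumr_eq0P _ _ xpredT (fun i => A i i)) => // j _.
  exact: psd_diag.
by apply/matrixP => i l; rewrite mxE; apply: psd_off0.
Qed.

Lemma sum_tens (V : nmodType) k d (F : 'I_(k * d) -> V) :
  \sum_(r < k * d) F r = \sum_(b < k) \sum_(i < d) F (mxtens_index (b, i)).
Proof.
rewrite pair_big /= (reindex (@mxtens_index k d)) /=.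
  by apply: eq_bigr => -[b i] _.
by exists (@mxtens_unindex k d) => x _; rewrite ?mxtens_indexK ?mxtens_unindexK.
Qed.

Lemma qfE (R : realType) n (A : 'M[R[i]]_n) v :
  qf A v = \sum_l \sum_i (conjc (v i ord0)) * A i l * v l ord0.
Proof.
rewrite /qf mxE; apply: eq_bigr => l _; rewrite mxE mulr_suml.
by apply: eq_bigr => i _; rewrite !mxE.
Qed.

Definition blk (R : realType) k d (X : 'M[R[i]]_(k * d)) (b : 'I_k) : 'M[R[i]]_d :=
  \matrix_(i, j) X (mxtens_index (b, i)) (mxtens_index (b, j)).

Lemma blkD (R : realType) k d (X Y : 'M[R[i]]_(k * d)) b : blk (X + Y) b = blk X b + blk Y b.
Proof. by apply/matrixP => i j; rewrite !mxE. Qed.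

Lemma blkB (R : realType) k d (X Y : 'M[R[i]]_(k * d)) b : blk (X - Y) b = blk X b - blk Y b.
Proof. by apply/matrixP => i j; rewrite !mxE. Qed.

Lemma ptrB_blk (R : realType) k d (X : 'M[R[i]]_(k * d)) : ptrB X = \sum_b blk X b.
Proof. by apply/matrixP => i j; rewrite !mxE summxE; apply: eq_bigr => b _; rewrite mxE. Qed.

Lemma tr_blk (R : realType) k d (X : 'M[R[i]]_(k * d)) : \tr X = \sum_b \tr (blk X b).
Proof. by rewrite /mxtrace sum_tens; apply: eq_bigr => b _; apply: eq_bigr => i _; rewrite mxE. Qed.

Lemma tr_projB (R : realType) k d (X : 'M[R[i]]_(k * d)) j :
  \tr (X *m projB R d j) = \tr (blk X j).
Proof.
rewrite /mxtrace sum_tens (bigD1 j) //= [X in _ + X]big1 ?addr0; last first.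
  move=> b hb; apply: big1 => i _; rewrite mxE sum_tens big1 // => b' _.
  by apply: big1 => i' _; rewrite /projB tensmxE !mxE (negbTE hb) andbF mul0r mulr0.
apply: eq_bigr => i _; rewrite mxE sum_tens (bigD1 j) //= [X in _ + X]big1 ?addr0; last first.
  move=> b hb; apply: big1 => i' _.
  by rewrite /projB tensmxE !mxE (negbTE hb) mul0r mulr0.
rewrite (bigD1 i) //= [X in _ + X]big1 ?addr0; last first.
  by move=> i' hi; rewrite /projB tensmxE !mxE (negbTE hi) !mulr0.
by rewrite tensmxE !mxE !eqxx /= mulr1 mulr1.
Qed.

Lemma psd_blk (R : realType) k d (X : 'M[R[i]]_(k * d)) b : psd X -> psd (blk X b).
Proof.
move=> hX v.
pose w : 'cV[R[i]]_(k * d) :=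
  \col_r (if (mxtens_unindex r).1 == b then v (mxtens_unindex r).2 ord0 else 0).
have hw b' i : w (mxtens_index (b', i)) ord0 = if b' == b then v i ord0 else 0.
  by rewrite mxE mxtens_indexK.
suff e : qf X w = qf (blk X b) v by have := hX w; rewrite -/(qf X w) e.
rewrite !qfE sum_tens (bigD1 b) //= [X in _ + X]big1 ?addr0; last first.
  move=> b' hb; apply: big1 => i _; rewrite hw (negbTE hb).
  by apply: big1 => r _; rewrite mulr0.
apply: eq_bigr => l _; rewrite sum_tens (bigD1 b) //= [X in _ + X]big1 ?addr0; last first.
  by move=> b' hb; apply: big1 => i _; rewrite hw (negbTE hb) rmorph0 !mul0r.
by apply: eq_bigr => i _; rewrite !hw !eqxx mxE.
Qed.

Lemma blk_diag (R : realType) k d (X : 'M[R[i]]_(k * d)) b : is_diag_mx X -> is_diag_mx (blk X b).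
Proof.
move=> /is_diag_mxP hX; apply/is_diag_mxP => i j hij; rewrite mxE; apply: hX.
apply: contra hij => /eqP e.
have : mxtens_index (b, i) = mxtens_index (b, j) :> 'I_(k * d) by apply: val_inj.
by move/(congr1 (@mxtens_unindex k d)); rewrite !mxtens_indexK => -[->].
Qed.

Lemma blk_zero (R : realType) k d (X : 'M[R[i]]_(k * d)) b :
  psd X -> \tr (blk X b) = 0 -> blk X b = 0.
Proof. by move=> hX; apply: psd_tr0; apply: psd_blk. Qed.

Lemma choiE (R : realType) n m (N : 'M[R[i]]_n -> 'M[R[i]]_m) a b c c' :
  choi N (mxtens_index (a, c)) (mxtens_index (b, c')) = N (delta_mx a b) c c'.
Proof.
rewrite /choi summxE (bigD1 a) //= [X in _ + X]big1 ?addr0; last first.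
  move=> a' ha; rewrite summxE big1 // => b' _.
  by rewrite tensmxE mxE eq_sym (negbTE ha) mul0r.
rewrite summxE (bigD1 b) //= [X in _ + X]big1 ?addr0; last first.
  by move=> b' hb; rewrite tensmxE mxE eqxx /= eq_sym (negbTE hb) mul0r.
by rewrite tensmxE mxE !eqxx mul1r.
Qed.

Lemma choi_rank1 (R : realType) n m (N : {linear 'M[R[i]]_n -> 'M[R[i]]_m}) :
  psd (choi N) -> forall v : 'cV[R[i]]_n, psd (N (v *m adjmx v)).
Proof.
move=> hC v w.
pose x : 'cV[R[i]]_(n * m) :=
  \col_r (conjc (v (mxtens_unindex r).1 ord0) * w (mxtens_unindex r).2 ord0).
have hx a c : x (mxtens_index (a, c)) ord0 = (conjc (v a ord0)) * w c ord0.
  by rewrite mxE mxtens_indexK.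
suff e : qf (choi N) x = qf (N (v *m adjmx v)) w by have := hC x; rewrite -/(qf _ x) e.
rewrite !qfE sum_tens.
have -> : v *m adjmx v = \sum_a \sum_b (v a ord0 * (conjc (v b ord0))) *: delta_mx a b.
  rewrite {1}(matrix_sum_delta (v *m adjmx v)); apply: eq_bigr => a _.
  by apply: eq_bigr => b _; rewrite mxE big_ord1 !mxE.
rewrite linear_sum.
have L : forall b c', \sum_(r < n * m) (conjc (x r ord0)) * choi N r (mxtens_index (b, c')) *
           x (mxtens_index (b, c')) ord0 =
         \sum_a \sum_c (conjc (w c ord0)) * (v a ord0 * (conjc (v b ord0)) * N (delta_mx a b) c c') * w c' ord0.
  move=> b c'; rewrite sum_tens; apply: eq_bigr => a _; apply: eq_bigr => c _.
  by rewrite !hx choiE conjM conjcK; ring.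
under eq_bigr => b _ do under eq_bigr => c' _ do rewrite L.
have R1 : forall c c', (\sum_a N (\sum_b (v a ord0 * (conjc (v b ord0))) *: delta_mx a b)) c c' =
   \sum_a \sum_b v a ord0 * (conjc (v b ord0)) * N (delta_mx a b) c c'.
  move=> c c'; rewrite summxE; apply: eq_bigr => a _; rewrite linear_sum summxE.
  by apply: eq_bigr => b _; rewrite linearZ mxE.
under [RHS]eq_bigr => c' _ do under eq_bigr => c _ do rewrite R1 mulr_sumr mulr_suml.
under [RHS]eq_bigr => c' _ do under eq_bigr => c _ do under eq_bigr => a _ do rewrite mulr_sumr mulr_suml.
under [RHS]eq_bigr => c' _ do rewrite exchange_big.
under [RHS]eq_bigr => c' _ do under eq_bigr => a _ do rewrite exchange_big.
under [RHS]eq_bigr => c' _ do rewrite exchange_big.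
by rewrite [RHS]exchange_big.
Qed.

Lemma adj_row_mul (R : realType) p n (B : 'M[R[i]]_(p, n)) :
  adjmx B *m B = \sum_c adjmx (row c B) *m row c B.
Proof.
apply/matrixP => i j; rewrite !mxE summxE; apply: eq_bigr => c _.
by rewrite !mxE big_ord1 !mxE.
Qed.

Lemma choi_gram (R : realType) n m (N : {linear 'M[R[i]]_n -> 'M[R[i]]_m}) :
  psd (choi N) -> forall p (B : 'M[R[i]]_(p, n)), psd (N (adjmx B *m B)).
Proof.
move=> hC p B; rewrite adj_row_mul linear_sum; apply: psd_sum => c.
by have := choi_rank1 hC (adjmx (row c B)); rewrite adjmxK.
Qed.

Lemma qf_sum (R : realType) n (I : finType) (F : I -> 'M[R[i]]_n) v :
  qf (\sum_i F i) v = \sum_i qf (F i) v.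
Proof. by rewrite /qf mulmx_sumr mulmx_suml summxE. Qed.

Lemma ip_eq (R : realType) k d (psi : 'I_k -> 'cV[R[i]]_d) :
  orthonormal_states psi -> forall i j, adjmx (psi i) *m psi j = ((i == j)%:R)%:M.
Proof. by move=> h i j; rewrite [LHS]mx11_scalar h. Qed.

Lemma herm_idem_gram (R : realType) d (H : 'M[R[i]]_d) :
  adjmx H = H -> H *m H = H -> 1%:M - H = adjmx (1%:M - H) *m (1%:M - H).
Proof.
move=> h1 h2; rewrite adjmxB adjmx1 h1 mulmxBl mulmxBr mulmxBr mul1mx mulmx1 h2.
by rewrite subrr subr0 mul1mx.
Qed.

Lemma rho_herm (R : realType) d (psi : 'cV[R[i]]_d) : adjmx (pure_proj psi) = pure_proj psi.
Proof. by rewrite /pure_proj adjmx_mul adjmxK. Qed.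

Lemma rho_idem (R : realType) k d (psi : 'I_k -> 'cV[R[i]]_d) :
  orthonormal_states psi -> forall j, pure_proj (psi j) *m pure_proj (psi j) = pure_proj (psi j).
Proof.
move=> h j; rewrite /pure_proj mulmxA -(mulmxA (psi j)) ip_eq // eqxx.
by rewrite mul_mx_scalar scale1r.
Qed.

Lemma rho_psd (R : realType) d (psi : 'cV[R[i]]_d) : psd (pure_proj psi).
Proof. by have := psd_gram (adjmx psi); rewrite adjmxK. Qed.

Lemma tr_rho (R : realType) k d (psi : 'I_k -> 'cV[R[i]]_d) :
  orthonormal_states psi -> forall j, \tr (pure_proj (psi j)) = 1.
Proof.
move=> h j; rewrite /pure_proj mxtrace_mulC ip_eq // eqxx mxtrace_scalar.
by [].
Qed.

Lemma P_psi (R : realType) k d (psi : 'I_k -> 'cV[R[i]]_d) :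
  orthonormal_states psi -> forall j, (\sum_i pure_proj (psi i)) *m psi j = psi j.
Proof.
move=> h j; rewrite mulmx_suml (bigD1 j) //= big1 ?addr0.
  by rewrite /pure_proj -mulmxA ip_eq // eqxx mul_mx_scalar scale1r.
move=> i hi; rewrite /pure_proj -mulmxA ip_eq // (negbTE hi).
by rewrite mul_mx_scalar scale0r.
Qed.

Lemma P_rho (R : realType) k d (psi : 'I_k -> 'cV[R[i]]_d) :
  orthonormal_states psi -> forall j,
  (\sum_i pure_proj (psi i)) *m pure_proj (psi j) = pure_proj (psi j).
Proof. by move=> h j; rewrite {1}/pure_proj mulmxA P_psi. Qed.

Lemma P_herm (R : realType) k d (psi : 'I_k -> 'cV[R[i]]_d) :
  adjmx (\sum_i pure_proj (psi i)) = \sum_i pure_proj (psi i).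
Proof. by rewrite adjmx_sum; apply: eq_bigr => i _; rewrite rho_herm. Qed.

Lemma P_idem (R : realType) k d (psi : 'I_k -> 'cV[R[i]]_d) :
  orthonormal_states psi ->
  (\sum_i pure_proj (psi i)) *m (\sum_i pure_proj (psi i)) = \sum_i pure_proj (psi i).
Proof. by move=> h; rewrite mulmx_sumr; apply: eq_bigr => i _; rewrite P_rho. Qed.

Lemma tr_mul_rho (R : realType) d (M : 'M[R[i]]_d) (psi : 'cV[R[i]]_d) :
  \tr (M *m pure_proj psi) = qf M psi.
Proof.
rewrite /pure_proj mulmxA mxtrace_mulC /qf mulmxA /mxtrace big_ord1.
by [].
Qed.

Lemma realc_sum (R : realType) (I : finType) (F : I -> R) :
  (\sum_i F i)%:C = \sum_i (F i)%:C.
Proof. by rewrite raddf_sum. Qed.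

Lemma qf1 (R : realType) k d (psi : 'I_k -> 'cV[R[i]]_d) :
  orthonormal_states psi -> forall j, qf 1%:M (psi j) = 1.
Proof. by move=> h j; rewrite /qf mulmx1 h eqxx. Qed.

Lemma povm_le1 (R : realType) k d (psi : 'I_k -> 'cV[R[i]]_d) (M : 'I_k -> 'M[R[i]]_d) :
  orthonormal_states psi -> POVM M -> forall j, qf (M j) (psi j) <= 1.
Proof.
move=> h [hM hS] j; rewrite -(qf1 h j) -hS qf_sum (bigD1 j) //= lerDl.
by apply: sumr_ge0 => i _; apply: hM.
Qed.

Lemma Psuc_one (R : realType) k d (p : 'I_k -> R) (psi : 'I_k -> 'cV[R[i]]_d) :
  (forall i, 0 <= p i) -> \sum_(i < k) p i = 1 -> orthonormal_states psi ->
  Psuc p (fun j => pure_proj (psi j)) = 1.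
Proof.
move=> hp hs h.
have hk : (0 < k)%N by case: k p psi hp hs h => [|//] p psi hp; rewrite big_ord0 => /eqP; rewrite eq_sym oner_eq0.
rewrite /Psuc; set S := (X in sup X).
have ub : ubound S 1.
  move=> x [M [hM hx]]; rewrite -lecR -[(1 : R)%:C]/(1 : R[i]) hx.
  rewrite -[1 : R[i]]/((1 : R)%:C) -hs realc_sum; apply: ler_sum => j _.
  rewrite tr_mul_rho -[X in _ <= X]mulr1; apply: ler_wpM2l; first by rewrite lecR.
  exact: povm_le1.
have mem : S 1.
  pose Q : 'M[R[i]]_d := 1%:M - \sum_i pure_proj (psi i).
  exists (fun j => pure_proj (psi j) + (k%:R^-1 : R[i]) *: Q); split.
    split.
      move=> j; apply: psdD; first exact: rho_psd.
      apply: psdZ; first by rewrite invr_ge0 ler0n.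
      rewrite /Q herm_idem_gram ?P_herm ?P_idem //; exact: psd_gram.
    rewrite big_split /= sumr_const card_ord scalerMnl -mulr_natr mulVf ?pnatr_eq0 -?lt0n //.
    by rewrite scale1r /Q addrC subrK.
  rewrite -hs realc_sum; apply: eq_bigr => j _.
  rewrite mulmxDl mxtraceD rho_idem // tr_rho // -scalemxAl mxtraceZ.
  have -> : Q *m pure_proj (psi j) = 0 by rewrite /Q mulmxBl mul1mx P_rho // subrr.
  by rewrite mxtrace0 mulr0 addr0 mulr1.
apply/le_anti; rewrite ge_sup //=; last by exists 1.
by rewrite ub_le_sup //; exists 1.
Qed.

Lemma realcM (R : realType) (a b : R) : (a * b)%:C = a%:C * b%:C.
Proof. by apply/eqP; rewrite eq_complex /= !mulr0 !mul0r subr0 addr0 !eqxx. Qed.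
Lemma realcD (R : realType) (a b : R) : (a + b)%:C = a%:C + b%:C.
Proof. by apply/eqP; rewrite eq_complex /= addr0 !eqxx. Qed.
Lemma realc0 (R : realType) : (0 : R)%:C = 0. Proof. by []. Qed.
Lemma realc1 (R : realType) : (1 : R)%:C = 1. Proof. by []. Qed.

Lemma diagZ (R : realType) d a (A : 'M[R[i]]_d) : is_diag_mx A -> is_diag_mx (a *: A).
Proof. by move=> /is_diag_mxP h; apply/is_diag_mxP => i j hij; rewrite mxE h // mulr0. Qed.

Lemma inc_scaled (R : realType) d (D : 'M[R[i]]_d) (t : R) :
  psd D -> is_diag_mx D -> \tr D = (1 + t)%:C -> 0 <= t ->
  incoherent (((1 + t)^-1)%:C *: D).
Proof.
move=> hD hd htr ht; split; last exact: diagZ.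
split; first by apply: psdZ => //; rewrite ler0c invr_ge0 addr_ge0.
by rewrite mxtraceZ htr -realcM mulVf // gt_eqF // ltr_pwDl.
Qed.

Lemma rob_le (R : realType) d (sig G : 'M[R[i]]_d) (s : R) :
  density sig -> psd G -> is_diag_mx (sig + G) -> \tr G = s%:C -> 0 <= s ->
  robustness sig <= s.
Proof.
move=> [hsp hst] hG hdiag htr hs.
rewrite /robustness; set S := (X in inf X).
have lb : has_lbound S by exists 0 => x [hx _].
have hD : psd (sig + G) by apply: psdD.
have htrD : \tr (sig + G) = (1 + s)%:C by rewrite mxtraceD hst htr realcD.
suff Ss : S s by apply: (ge_inf lb).
split => //.
have [s0|sn0] := eqVneq s 0.
  have G0 : G = 0 by apply: psd_tr0 => //; rewrite htr s0.
  exists sig; split; first by split.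
  have -> : sig + s%:C *: sig = sig + G by rewrite G0 s0 scale0r.
  exact: inc_scaled.
exists ((s^-1)%:C *: G); split.
  split; first by apply: psdZ => //; rewrite ler0c invr_ge0.
  by rewrite mxtraceZ htr -realcM mulVf.
rewrite scalerA -realcM mulfV // scale1r.
exact: inc_scaled.
Qed.

Lemma ge0_real (R : realType) (x : R[i]) : 0 <= x -> x = (complex.Re x)%:C.
Proof. by move=> /ger0_Im; case: x => a b /= ->. Qed.

Lemma realc_nat (R : realType) n : (n%:R : R)%:C = n%:R.
Proof. by elim: n => [//|n IH]; rewrite !mulrS realcD IH. Qed.

Lemma realcN (R : realType) (a : R) : (- a)%:C = - a%:C.
Proof. by apply/eqP; rewrite eq_complex /= oppr0 !eqxx. Qed.

Lemma realcB (R : realType) (a b : R) : (a - b)%:C = a%:C - b%:C.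
Proof. by rewrite realcD realcN. Qed.

Lemma tr_psd_ge0 (R : realType) d (A : 'M[R[i]]_d) : psd A -> 0 <= \tr A.
Proof. by move=> h; apply: sumr_ge0 => i _; apply: psd_diag. Qed.

Lemma pmax_ge (R : realType) k (p : 'I_k -> R) j : p j <= \big[Num.max/0]_(i < k) p i.
Proof. exact: le_bigmax. Qed.

Lemma d_pos (R : realType) k d (psi : 'I_k -> 'cV[R[i]]_d) (j : 'I_k) :
  orthonormal_states psi -> (0 < d)%N.
Proof.
case: d psi => [|//] psi h; have := h j j; rewrite eqxx mxE big_ord0 => /eqP.
by rewrite eq_sym oner_eq0.
Qed.

Lemma N1_diag (R : realType) k d (N : {linear 'M[R[i]]_d -> 'M[R[i]]_(k * d)}) :
  (0 < d)%N -> MIO N -> is_diag_mx (N 1%:M).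
Proof.
move=> hd [_ hinc].
have hc : (d%:R : R[i]) != 0 by rewrite pnatr_eq0 -lt0n.
have : incoherent ((d%:R^-1 : R[i]) *: (1%:M : 'M[R[i]]_d)).
  split; last by apply: diagZ; apply/is_diag_mxP => i j hij; rewrite mxE; have/negbTE-> : i != j by apply: contra hij => /eqP ->.
  split.
    apply: psdZ; first by rewrite invr_ge0 ler0n.
    by have := psd_gram (1%:M : 'M[R[i]]_(d,d)); rewrite adjmx1 mul1mx.
  by rewrite mxtraceZ mxtrace1 mulVf.
move=> /hinc [_]; rewrite linearZ /= => /(diagZ (d%:R : R[i])).
by rewrite scalerA mulfV // scale1r.
Qed.

Lemma eta_elem (R : realType) k d (p : 'I_k -> R) (psi : 'I_k -> 'cV[R[i]]_d)
  (N : {linear 'M[R[i]]_d -> 'M[R[i]]_(k * d)}) :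
  (forall i, 0 <= p i) -> \sum_(i < k) p i = 1 -> orthonormal_states psi ->
  MIO N ->
  \sum_(j < k) (p j)%:C * \tr (N (pure_proj (psi j)) *m projB R d j) = 1 ->
  \sum_(j < k) p j * robustness (ptrB (N (pure_proj (psi j)))) <=
  \big[Num.max/0]_(i < k) p i * d%:R - 1.
Proof.
move=> hp hs h hMIO hsum.
have hM := hMIO; case: hMIO => [[hC htp] hinc].
set rho := fun j => pure_proj (psi j).
set pmax := \big[Num.max/0]_(i < k) p i.
have hNrho j : psd (N (rho j)).
  by have := choi_gram hC (adjmx (psi j)); rewrite adjmxK.
have hNI j : psd (N (1%:M - rho j)).
  by rewrite /rho herm_idem_gram ?rho_herm ?rho_idem //; apply: choi_gram.
have hN1 : psd (N 1%:M).
  by have := choi_gram hC (1%:M : 'M[R[i]]_d); rewrite adjmx1 mul1mx.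
have trNrho j : \tr (N (rho j)) = 1 by rewrite htp /rho tr_rho.
have tb_ge0 X b : psd X -> 0 <= \tr (blk X b :> 'M[R[i]]_d).
  by move=> hX; apply: tr_psd_ge0; apply: psd_blk.
have tle j : \tr (blk (N (rho j)) j) <= 1.
  rewrite -(trNrho j) (tr_blk (N (rho j))) (bigD1 j) //= lerDl.
  by apply: sumr_ge0 => b _; apply: tb_ge0.
have t1 j : p j != 0 -> \tr (blk (N (rho j)) j) = 1.
  move=> hpj.
  have hz : \sum_j (p j)%:C * (1 - \tr (blk (N (rho j)) j)) = 0.
    under eq_bigr => i _ do rewrite mulrBr mulr1.
    by rewrite sumrB -realc_sum hs; under eq_bigr => i _ do rewrite -tr_projB; rewrite hsum subrr.
  have hnn : forall i, xpredT i -> 0 <= (p i)%:C * (1 - \tr (blk (N (rho i)) i)).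
    move=> i _; apply: mulr_ge0; first by rewrite ler0c.
    by rewrite subr_ge0.
  have := @psumr_eq0P _ _ xpredT (fun j => (p j)%:C * (1 - \tr (blk (N (rho j)) j))) hnn hz j isT.
  move=> /eqP; rewrite mulf_eq0; case/ssrbool.orP.
    by rewrite -[0]/((0 : R)%:C) => /eqP /complexI /eqP; rewrite (negbTE hpj).
  by rewrite subr_eq0 => /eqP <-.
have sig_eq j : p j != 0 -> ptrB (N (rho j)) = blk (N (rho j)) j.
  move=> hpj; rewrite ptrB_blk (bigD1 j) //= [X in _ + X]big1 ?addr0 // => b hb.
  apply: blk_zero => //.
  have hz : \sum_(b < k | b != j) \tr (blk (N (rho j)) b) = 0.
    have := trNrho j; rewrite (tr_blk (N (rho j))) (bigD1 j) //= t1 //.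
    by move=> e; apply: (addrI 1); rewrite e addr0.
  apply: (@psumr_eq0P _ _ (fun b => b != j) (fun b => \tr (blk (N (rho j)) b))) => //.
  by move=> i _; apply: tb_ge0.
pose T j := complex.Re (\tr (blk (N 1%:M) j)).
have trT j : \tr (blk (N 1%:M) j) = (T j)%:C by apply: ge0_real; apply: tb_ge0.
have T0 j : 0 <= T j by rewrite -ler0c -trT; apply: tb_ge0.
have sumT : \sum_j T j = d%:R.
  apply: complexI; rewrite realc_sum realc_nat.
  under eq_bigr => j _ do rewrite -trT.
  by rewrite -tr_blk htp mxtrace1.
have robj j : p j != 0 -> robustness (ptrB (N (rho j))) <= T j - 1.
  move=> hpj; rewrite sig_eq //.
  have eG : \tr (blk (N (1%:M - rho j)) j) = (T j - 1)%:C.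
    by rewrite linearB /= blkB raddfB /= trT t1 // realcB.
  apply: (@rob_le _ _ _ (blk (N (1%:M - rho j)) j)).
  - by split; [apply: psd_blk | apply: t1].
  - exact: psd_blk.
  - by rewrite -blkD linearB /= addrC subrK; apply: blk_diag; apply: N1_diag hM; apply: (d_pos j h).
  - exact: eG.
  - by rewrite -ler0c -eG; apply: tr_psd_ge0; apply: psd_blk.
have pm j : p j <= pmax by apply: pmax_ge.
have pm0 : 0 <= pmax.
  have hk : (0 < k)%N.
    case: (posnP k) => [k0|//]; exfalso; move: hs; clearbody rho pmax T; subst k.
    by rewrite big_ord0 => /eqP; rewrite eq_sym oner_eq0.
  exact: le_trans (hp (Ordinal hk)) (pm _).
rewrite -sumT mulr_sumr -hs -sumrB; apply: ler_sum => j _.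
have [pj0|pjn0] := eqVneq (p j) 0.
  by rewrite pj0 mul0r subr0; apply: mulr_ge0.
apply: le_trans (ler_wpM2l (hp j) (robj j pjn0)) _.
by rewrite mulrBr mulr1 lerD2r; apply: ler_wpM2r => //; apply: pm.
Qed.

From mathcomp Require Import boolp.

Lemma trB (R : realType) d (A B : 'M[R[i]]_d) : \tr (A - B) = \tr A - \tr B.
Proof. exact: raddfB. Qed.
Lemma tr_sum (R : realType) d (I : finType) (F : I -> 'M[R[i]]_d) :
  \tr (\sum_i F i) = \sum_i \tr (F i).
Proof. exact: raddf_sum. Qed.

Lemma pmax_d (R : realType) k d (p : 'I_k -> R) (psi : 'I_k -> 'cV[R[i]]_d) :
  (forall i, 0 <= p i) -> \sum_(i < k) p i = 1 -> orthonormal_states psi ->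
  1 <= \big[Num.max/0]_(i < k) p i * d%:R.
Proof.
move=> hp hs h.
set pmax := \big[Num.max/0]_(i < k) p i.
have h1 : 1 <= pmax * k%:R.
  rewrite -[X in X <= _]hs mulr_natr.
  have -> : pmax *+ k = \sum_(i < k) pmax by rewrite sumr_const card_ord.
  by apply: ler_sum => i _; apply: pmax_ge.
have hkd : (k%:R : R) <= d%:R.
  have hQ : psd (1%:M - \sum_i pure_proj (psi i)).
    by rewrite herm_idem_gram ?P_herm ?P_idem //; apply: psd_gram.
  have := tr_psd_ge0 hQ; rewrite trB mxtrace1 tr_sum.
  under eq_bigr => i _ do rewrite tr_rho //.
  by rewrite sumr_const card_ord -!realc_nat -realcB ler0c subr_ge0.
have pm0 : 0 <= pmax.
  have [k0|hk] := posnP k.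
    by move: hs; clearbody pmax; subst k; rewrite big_ord0 => /eqP; rewrite eq_sym oner_eq0.
  exact: le_trans (hp (Ordinal hk)) (pmax_ge _ _).
apply: le_trans h1 _; exact: ler_wpM2l.
Qed.

Unset Implicit Arguments.
Local Close Scope complex_scope.

Theorem theoremS1 (R : realType) (d k : nat) (p : 'I_k -> R)
    (psi : 'I_k -> 'cV[R[i]]_d) :
  (forall i, 0 <= p i) -> \sum_(i < k) p i = 1 ->
  orthonormal_states psi ->
  C_MIO p (fun j => pure_proj (psi j)) + S_min p <= log2 d%:R.
Proof.
move=> hp hs h.
have hPs := Psuc_one hp hs h.
have pd1 := pmax_d hp hs h.
set pmax := \big[Num.max/0]_(i < k) p i in pd1 *.
have heta : eta_MIO p (fun j => pure_proj (psi j)) <= pmax * d%:R - 1.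
  rewrite /eta_MIO; set E := (X in sup X).
  have ubE : ubound E (pmax * d%:R - 1).
    move=> x [N [hN [hc ->]]]; apply: eta_elem => //.
    by rewrite hc hPs.
  have [[x Ex]|ne] := pselect (exists x, E x).
    by apply: ge_sup => //; exists x.
  have -> : E = set0.
    by apply/seteqP; split => x Ex //; exfalso; apply: ne; exists x.
  by rewrite sup0 subr_ge0.
set eta := eta_MIO _ _ in heta *.
rewrite /C_MIO /S_min /log2 -/pmax -/eta.
have l2 : 0 < ln (2 : R) by apply: ln_gt0; rewrite ltr1n.
rewrite -mulNr -mulrDl ler_pM2r ?invr_gt0 //.
have hd : 0 < (d%:R : R).
  rewrite ltr0n lt0n; apply/eqP => d0; move: pd1; rewrite d0 mulr0 ler10 //.
have hpm : 0 < pmax by nra.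
have hlnM : ln (pmax * d%:R) = ln pmax + ln d%:R by rewrite lnM // posrE.
have hl0 : 0 <= ln (pmax * d%:R) by apply: ln_ge0.
rewrite lerBlDr.
have [h0|h0] := lerP (1 + eta) 0.
  by rewrite ln0 // addrC -hlnM.
rewrite [ln d%:R + _]addrC -hlnM ler_ln ?posrE //; first lra.
by apply: lt_le_trans pd1.
Qed.
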